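(* Let $(\Lambda,d)$ be a topological $1$-graph. For all $f\in C_c(\Lambda^0)$ and $\xi,\eta\in C_c(\Lambda^1)$ we have, in $C^*(G_\Lambda)$, (i) $\Psi_1(\xi)^*\Psi_1(\eta)=\Psi_0(\langle\xi,\eta\rangle)$ and (ii) $\Psi_0(f)\Psi_1(\xi)=\Psi_1(\phi(f)\xi)$.
   Context: A topological $1$-graph is a pair $(\Lambda,d)$ with $\Lambda$ a small category whose object set $\Lambda^0$ and morphism set $\Lambda$ are second-countable locally compact Hausdorff spaces, $r,s$ continuous with $s$ a local homeomorphism, composition continuous and open, $d:\Lambda\to\mathbb{N}$ a continuous functor, with unique factorization: for $d(\lambda)=m+n$ there is a unique composable $(\xi,\eta)$ with $\lambda=\xi\eta$, $d(\xi)=m$, $d(\eta)=n$. Objects are identified with degree-$0$ paths, $\Lambda^1=d^{-1}(1)$, $\lambda(p,q)$ denotes the degree-$(q-p)$ segment. The path space $X_\Lambda$ consists of degree-preserving continuous functors $x:\Omega_{1,m}\to\Lambda$ ($m\in\mathbb{N}\cup\{\infty\}$, where $\Omega_{1,m}$ is the discrete category with objects $\{p\le m\}$, morphisms $(p,q)$, $p\le q\le m$, of degree $q-p$), with $r(x)=x(0)$, $d(x)=m$, concatenation $\lambda x$ and shift $(\sigma^mx)(0,p)=x(m,m+p)$. The path groupoid $G_\Lambda$ has morphisms $(\lambda x,d(\lambda)-d(\mu),\mu x)$ with $s(\lambda)=s(\mu)=r(x)$, range/source the first/third coordinates, product $(x,m,y)(y,n,z)=(x,m+n,z)$, inverse $(y,-m,x)$,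 unit space identified with $X_\Lambda$; with its standard topology (basis $Z(U*_sV,m)\cap Z(F,m)^c$ for $U,V\subset\Lambda$ open, $F\subset\Lambda*_s\Lambda$ compact, where $Z(F,m)=\{(\lambda x,m,\mu x):(\lambda,\mu)\in F,d(\lambda)-d(\mu)=m\}$) it is a locally compact Hausdorff $r$-discrete groupoid with counting-measure Haar system, so $C_c(G_\Lambda)\subset C^*(G_\Lambda)$ with convolution product, and $C_0(G_\Lambda^{(0)})\subset C^*(G_\Lambda)$. For $\xi,\eta\in C_c(\Lambda^1)$, $\langle\xi,\eta\rangle(v)=\sum_{e\in\Lambda^1,s(e)=v}\overline{\xi(e)}\eta(e)$, and for $f\in C_0(\Lambda^0)$, $(\phi(f)\xi)(e)=f(r(e))\xi(e)$. Define $\Psi_0(f)\in C_0(G_\Lambda^{(0)})\subset C^*(G_\Lambda)$ by $\Psi_0(f)(x,0,x)=f(r(x))$, and for $\xi\in C_c(\Lambda^1)$ define $\Psi_1(\xi)\in C_c(G_\Lambda)$ by $\Psi_1(\xi)(x,m,y)=\delta_{m,1}\delta_{\sigma^1x,y}\,\xi(x(0,1))$. *)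

(* Defs.v *)
From HB Require Import structures.
From mathcomp Require Import all_boot all_order all_algebra.
From mathcomp Require Import all_classical all_reals.
From mathcomp Require Import topology normedtype.
From mathcomp Require Import complex.
Set Implicit Arguments. Unset Strict Implicit. Unset Printing Implicit Defensive.
Import Order.TTheory GRing.Theory Num.Theory.
Import numFieldTopology.Exports numFieldNormedType.Exports.
Local Open Scope classical_set_scope.
Local Open Scope ring_scope.

Definition local_homeo (X Y : topologicalType) (f : X -> Y) : Prop :=
  forall x, exists U : set X,
    [/\ open U, U x, open (f @` U),
        (forall a b, U a -> U b -> f a = f b -> a = b) &
        {within U, continuous f} /\
        (forall V : set X, open V -> V `<=` U -> open (f @` V))].

Definition sclch (T : topologicalType) : Prop :=
  [/\ @second_countable T, locally_compact [set: T] & hausdorff_space T].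

(* Morphisms are [Mor], objects are [Obj];
   objects are identified with degree-0 morphisms via [idm]; composition
   [cmp a b] (= "a b", first b then a, s a = r b) is meaningful only on
   composable pairs. *)
Record top1graph := Top1Graph {
  Obj : topologicalType;
  Mor : topologicalType;
  rg : Mor -> Obj;
  sc : Mor -> Obj;
  idm : Obj -> Mor;
  cmp : Mor -> Mor -> Mor;
  deg : Mor -> nat;
  sc_idm : forall v, sc (idm v) = v;
  rg_idm : forall v, rg (idm v) = v;
  sc_cmp : forall a b, sc a = rg b -> sc (cmp a b) = sc b;
  rg_cmp : forall a b, sc a = rg b -> rg (cmp a b) = rg a;
  cmp_idl : forall a, cmp (idm (rg a)) a = a;
  cmp_idr : forall a, cmp a (idm (sc a)) = a;
  cmpA : forall a b c, sc a = rg b -> sc b = rg c ->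
           cmp a (cmp b c) = cmp (cmp a b) c;
  Obj_sclch : sclch Obj;
  Mor_sclch : sclch Mor;
  rg_cont : continuous rg;
  sc_lh : local_homeo sc;
  idm_cont : continuous idm;
  cmp_cont : {within [set p : Mor * Mor | sc p.1 = rg p.2],
                continuous (fun p : Mor * Mor => cmp p.1 p.2)};
  cmp_open : forall W : set (Mor * Mor), open W ->
      open ((fun p : Mor * Mor => cmp p.1 p.2) @`
              (W `&` [set p | sc p.1 = rg p.2]));
  (* d : Lambda -> N continuous (N discrete) *)
  deg_cont : forall n : nat, open (deg @^-1` [set n]);
  deg_idm : forall v, deg (idm v) = 0%N;
  deg_cmp : forall a b, sc a = rg b -> deg (cmp a b) = (deg a + deg b)%N;
  unique_fact : forall (l : Mor) (m n : nat), deg l = (m + n)%N ->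
      exists! p : Mor * Mor,
        [/\ sc p.1 = rg p.2, l = cmp p.1 p.2, deg p.1 = m & deg p.2 = n]
}.

(* A path x : Omega_{1,m} -> Lambda is encoded by
   its degree m (None = infinity) and its morphism map
   (p,q) |-> x(p,q), with value None outside the morphisms p <= q <= m of
   Omega_{1,m}.  (Objects p of Omega_{1,m} are sent to x(p,p).) *)
Record gpath (L : top1graph) := Path {
  pdeg : option nat;
  pfun : nat -> nat -> option (Mor L) }.

HB.instance Definition _ (L : top1graph) := gen_eqMixin (gpath L).
HB.instance Definition _ (L : top1graph) := gen_choiceMixin (gpath L).

Definition le_deg (m : option nat) (p : nat) : bool :=
  if m is Some k then (p <= k)%N else true.

(* x is a degree-preserving functor Omega_{1,m} -> Lambda *)
Definition is_path (L : top1graph) (x : gpath L) : Prop :=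
  [/\ (forall p q, pfun x p q <> None <-> ((p <= q)%N /\ le_deg (pdeg x) q)),
      (forall p q l, pfun x p q = Some l -> deg l = (q - p)%N),
      (forall p, le_deg (pdeg x) p -> exists v, pfun x p p = Some (idm v)) &
      (forall p q t a b, pfun x p q = Some a -> pfun x q t = Some b ->
          sc a = rg b /\ pfun x p t = Some (cmp a b))].

Definition prange (L : top1graph) (x : gpath L) : option (Obj L) :=
  omap (@rg L) (pfun x 0 0).

Definition shift (L : top1graph) (n : nat) (x : gpath L) : gpath L :=
  Path (omap (fun k => (k - n)%N) (pdeg x))
       (fun p q => pfun x (n + p) (n + q)).

Definition add_deg (n : nat) (m : option nat) : option nat :=
  omap (fun k => (n + k)%N) m.

Definition concat_rel (L : top1graph) (l : Mor L) (x z : gpath L) : Prop :=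
  [/\ is_path z, pdeg z = add_deg (deg l) (pdeg x),
      pfun z 0 (deg l) = Some l & shift (deg l) z = x].

(* the path groupoid G_Lambda: (lambda z, d(lambda) - d(mu), mu z) *)
Definition inG (L : top1graph) (x : gpath L) (k : int) (y : gpath L) : Prop :=
  exists (l mu : Mor L) (z : gpath L),
    [/\ is_path z, prange z = Some (sc l), prange z = Some (sc mu),
        concat_rel l z x & concat_rel mu z y /\
        k = (deg l)%:Z - (deg mu)%:Z].

(* Complex-valued functions on G_Lambda, with the convolution product and
   involution of C_c(G_Lambda) (counting-measure Haar system). *)
(* the complex numbers R[i] over a real field R (for R = the reals this is C),
   seen as a numClosedFieldType so that it carries its norm topology *)
Definition CC (R : realType) : numClosedFieldType := R[i].

Section Conv.
Variable R : realType.
Local Notation C := (CC R).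

Definition gfun (L : top1graph) := gpath L -> int -> gpath L -> C.

Definition conv (L : top1graph) (a b : gfun L) : gfun L :=
  fun x k z =>
    \sum_(p \in [set p : gpath L * int | inG x p.2 p.1])
       a x p.2 p.1 * b p.1 (k - p.2) z.

Definition gstar (L : top1graph) (a : gfun L) : gfun L :=
  fun x k y => (a y (- k) x)^*.

Definition Cc0 (L : top1graph) (f : Obj L -> C) : Prop :=
  continuous f /\ exists K : set (Obj L), compact K /\ forall v, f v != 0 -> K v.

Definition Lam1 (L : top1graph) : set (Mor L) := [set e | deg e = 1%N].

(* C_c(Lambda^1), functions given on Mor and only their values on Lambda^1
   matter *)
Definition Cc1 (L : top1graph) (xi : Mor L -> C) : Prop :=
  {within @Lam1 L, continuous xi} /\
  exists K : set (Mor L), [/\ compact K, K `<=` @Lam1 L &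
                              forall e, @Lam1 L e -> xi e != 0 -> K e].

Definition inner (L : top1graph) (xi eta : Mor L -> C) : Obj L -> C :=
  fun v => \sum_(e \in [set e : Mor L | deg e = 1%N /\ sc e = v])
              (xi e)^* * eta e.

Definition phiL (L : top1graph) (f : Obj L -> C) (xi : Mor L -> C) : Mor L -> C :=
  fun e => f (rg e) * xi e.

Definition Psi0 (L : top1graph) (f : Obj L -> C) : gfun L :=
  fun x k y =>
    if (k == 0) && (x == y) then
      (if prange x is Some v then f v else 0)
    else 0.

Definition Psi1 (L : top1graph) (xi : Mor L -> C) : gfun L :=
  fun x k y =>
    if pfun x 0 1 is Some e then
      (if (k == 1) && (shift 1 x == y) then xi e else 0)
    else 0.

End Conv.

(* Main.v *)
Require Import Defs.
From HB Require Import structures.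
From mathcomp Require Import all_boot all_order all_algebra.
From mathcomp Require Import all_classical all_reals.
From mathcomp Require Import topology normedtype.
From mathcomp Require Import complex.
Import Order.TTheory GRing.Theory Num.Theory.
Local Open Scope classical_set_scope.
Local Open Scope ring_scope.

Set Implicit Arguments. Unset Strict Implicit.
Section Aux.
Variable L : top1graph.
Implicit Types x y : gpath L.

Lemma gpath_ext x y : pdeg x = pdeg y ->
  (forall p q, pfun x p q = pfun y p q) -> x = y.
Proof.
case: x => dx fx; case: y => dy fy /= -> H; congr Path.
by apply/funext=> p; apply/funext => q; exact: H.
Qed.

Lemma path_id0 x : is_path x -> exists v, pfun x 0 0 = Some (idm v).
Proof. by case=> _ _ H3 _; apply: H3; case: (pdeg x). Qed.

Lemma path_rg x v q l : is_path x -> pfun x 0 0 = Some (idm v) ->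
  pfun x 0 q = Some l -> rg l = v.
Proof.
case=> _ _ _ H4 h0 hq; have [+ _] := H4 _ _ _ _ _ h0 hq.
by rewrite sc_idm => <-.
Qed.

Lemma le_deg_add1 m q : le_deg (add_deg 1 m) q.+1 = le_deg m q.
Proof. by case: m => //= k; rewrite add1n ltnS. Qed.

Definition pcons (e : Mor L) x : gpath L :=
  Path (add_deg 1 (pdeg x)) (fun p q => match p, q with
    | 0, 0 => Some (idm (rg e))
    | 0, q'.+1 => omap (cmp e) (pfun x 0 q')
    | p'.+1, 0 => None
    | p'.+1, q'.+1 => pfun x p' q' end)%N.

Lemma pcons_path e x v : is_path x -> pfun x 0 0 = Some (idm v) ->
  sc e = v -> deg e = 1%N -> is_path (pcons e x).
Proof.
move=> Hx; have [H1 H2 H3 H4] := Hx; move=> h0 hs hd; split.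
- move=> [|p] [|q] /=.
  + by split=> // _; case: (pdeg x).
  + rewrite le_deg_add1; have [A B] := H1 0%N q.
    case: (pfun x 0 q) A B => /= [a|] A B.
      by split=> // _; have [_ ?] := A ltac:(done).
    by split=> [/(_ erefl)|[_ h]] //; apply: B.
  + by split=> [/(_ erefl)|[]].
  + by rewrite le_deg_add1 ltnS; apply: H1.
- move=> [|p] [|q] l /=.
  + by case=> <-; rewrite deg_idm.
  + case Hq: (pfun x 0 q) => [a|] //= [<-].
    rewrite deg_cmp ?hd ?(H2 _ _ _ Hq) ?subn0 ?add1n //.
    by rewrite hs (path_rg Hx h0 Hq).
  + by [].
  + by move=> /H2 ->; rewrite subSS.
- move=> [|p] /=; first by move=> _; exists (rg e).
  by rewrite le_deg_add1; apply: H3.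
- move=> [|p] [|q] [|t] a b //=.
  + by case=> <- [<-]; rewrite sc_idm rg_idm; split=> //; have := cmp_idl (idm (rg e)); rewrite rg_idm => ->.
  + case=> <-; case Hq: (pfun x 0 t) => [c|] //= [<-].
    have hrc : rg (cmp e c) = rg e by rewrite rg_cmp // hs (path_rg Hx h0 Hq).
    by rewrite sc_idm hrc; split=> //; have := cmp_idl (cmp e c); rewrite hrc => ->.
  + case Hq: (pfun x 0 q) => [c|] //= [<-] Hb.
    have [E1 E2] := H4 _ _ _ _ _ Hq Hb.
    have hrc : sc e = rg c by rewrite hs (path_rg Hx h0 Hq).
    by rewrite sc_cmp // E1 E2 /= cmpA.
  + exact: H4.
Qed.

Lemma concat_pcons e x v : is_path x -> pfun x 0 0 = Some (idm v) ->
  sc e = v -> deg e = 1%N -> concat_rel e x (pcons e x).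
Proof.
move=> Hx h0 hs hd; split.
- exact: pcons_path Hx h0 hs hd.
- by rewrite hd.
- by rewrite hd /= h0 /= -hs cmp_idr.
- rewrite hd; apply: gpath_ext => /=.
    by case: (pdeg x) => //= k; rewrite ?add1n subn1.
  by move=> p q; rewrite ?add1n.
Qed.

Lemma concat_self x v : is_path x -> pfun x 0 0 = Some (idm v) ->
  concat_rel (idm v) x x.
Proof.
move=> Hx h0; split => //; rewrite ?deg_idm //.
- by case: (pdeg x).
- apply: gpath_ext => /=; first by case: (pdeg x) => //= k; rewrite subn0.
  by move=> p q; rewrite !add0n.
Qed.

Lemma inG_self x v : is_path x -> pfun x 0 0 = Some (idm v) -> inG x 0 x.
Proof.
move=> Hx h0; exists (idm v), (idm v), x; split => //.
- by rewrite /prange h0 /= rg_idm sc_idm.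
- by rewrite /prange h0 /= rg_idm sc_idm.
- exact: concat_self.
- by split; [exact: concat_self|rewrite subrr].
Qed.

Lemma inG_pcons x v e : is_path x -> pfun x 0 0 = Some (idm v) ->
  sc e = v -> deg e = 1%N -> inG x (-1) (pcons e x).
Proof.
move=> Hx h0 hs hd; exists (idm v), e, x; split => //.
- by rewrite /prange h0 /= rg_idm sc_idm.
- by rewrite /prange h0 /= rg_idm hs.
- exact: concat_self.
- by split; [exact: (concat_pcons Hx h0 hs hd)|rewrite deg_idm hd].

Qed.

Lemma pcons_uniq y e : is_path y -> pfun y 0 1 = Some e ->
  [/\ y = pcons e (Defs.shift 1 y), deg e = 1%N &
      pfun (Defs.shift 1 y) 0 0 = Some (idm (sc e))].
Proof.
move=> Hy; have [H1 H2 H3 H4] := Hy; move=> h01.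
have [u hu] := path_id0 Hy.
have hle1 : le_deg (pdeg y) 1.
  by have [+ _] := H1 0%N 1%N; rewrite h01 => /(_ ltac:(done)) [].
have [w hw] := H3 1%N hle1.
have [E1 E2] := H4 _ _ _ _ _ h01 hw.
split.
- have hue : u = rg e by rewrite (path_rg Hy hu h01).
  apply: gpath_ext => /=.
    case Hd: (pdeg y) hle1 => [k|] //= hk.
    by rewrite add1n subn1 prednK.
  move=> [|p] [|q] /=.
  + by rewrite hu hue.
  + rewrite add1n; case Hq: (pfun y 1 q.+1) => [l|] /=.
      by have [_ ->] := H4 _ _ _ _ _ h01 Hq.
    case Hq0: (pfun y 0 q.+1) => [a|] //; exfalso.
    have [+ _] := H1 0%N q.+1; rewrite Hq0 => /(_ ltac:(done)) [_ Hl].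
    by have [_ B] := H1 1%N q.+1; apply: B => //; rewrite Hq.
  + case Hp: (pfun y p.+1 0) => [a|] //; exfalso.
    by have [+ _] := H1 p.+1 0%N; rewrite Hp => /(_ ltac:(done)) [].
  + by rewrite !add1n.
- by rewrite (H2 _ _ _ h01).
- by rewrite /= add1n hw E1 rg_idm.
Qed.

End Aux.
Unset Implicit Arguments. Set Strict Implicit.

Theorem lemma5p3 (R : realType) (L : top1graph)
    (f : Obj L -> CC R) (xi eta : Mor L -> CC R) :
  Cc0 f -> Cc1 xi -> Cc1 eta ->
  (forall (x : gpath L) (k : int) (y : gpath L), inG x k y ->
     conv (gstar (Psi1 xi)) (Psi1 eta) x k y = Psi0 (inner xi eta) x k y) /\
  (forall (x : gpath L) (k : int) (y : gpath L), inG x k y ->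
     conv (Psi0 f) (Psi1 xi) x k y = Psi1 (phiL f xi) x k y).
Proof.
move=> _ _ _; split.
- move=> x k y [l [mu [z [Hz _ _ Hcx [Hcy _]]]]].
  have [Hx _ _ _] := Hcx.
  have [v h0] := path_id0 Hx.
  rewrite /conv /Psi0 /prange h0 /=.
  case: (boolP ((k == 0) && (x == y))) => [/andP[/eqP-> /eqP<-]|Hne].
  + rewrite rg_idm.
    set E := [set e : Mor L | deg e = 1%N /\ sc e = v].
    rewrite -(@fsbig_widen _ _ _ _ ((fun e => (pcons e x, -1)) @` E)).
    * rewrite fsbig_image.
        apply: eq_fsbigr => e; rewrite inE => -[hd hs] /=.
        rewrite /gstar /Psi1 /= h0 /= -hs cmp_idr ?opprK /=.
        have -> : Defs.shift 1 (pcons e x) = x.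
          by have [_ _ _] := concat_pcons Hx h0 hs hd; rewrite hd.
        by rewrite eqxx.
      move=> e1 e2; rewrite !inE => -[_ hs1] [_ hs2] Heq.
      move: (f_equal (fun p => pfun p.1 0 1) Heq) => /=.
      by rewrite h0 /= -{1}hs1 -hs2 !cmp_idr => -[].
    * move=> _ [e [hd hs] <-] /=; exact: inG_pcons Hx h0 hs hd.
    * move=> [y' n] [/= HS Hni]; rewrite /preimage /=.
      rewrite /gstar /Psi1.
      case Hy: (pfun y' 0 1) => [e|]; last by rewrite conjC0 mul0r.
      case: ifP => [/andP[/eqP Hn /eqP Hs]|_]; last by rewrite conjC0 mul0r.
      exfalso; apply: Hni.
      have Hy' : is_path y'.
        by case: HS => [l' [mu' [z' [_ _ _ _ [[]]]]]].
      have [Ey hd hs] := pcons_uniq Hy' Hy.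
      rewrite Hs in Ey hs.
      have hv : sc e = v.
        by move: hs; rewrite h0 => -[] /(congr1 (@sc L)); rewrite !sc_idm.
      exists e; first by split.
      by rewrite -Ey -Hn opprK.
  + apply: fsbig1 => -[y' n] /= _.
    rewrite /gstar /Psi1.
    case Hy: (pfun y' 0 1) => [e|]; last by rewrite conjC0 mul0r.
    case: ifP => [/andP[/eqP Hn /eqP Hs]|_]; last by rewrite conjC0 mul0r.
    case: ifP => [/andP[/eqP Hk /eqP Hs']|_]; last by rewrite mulr0.
    exfalso; move: Hne; rewrite -Hs -Hs' eqxx andbT.
    have hn : n = -1 by rewrite -Hn opprK.
    move: Hk; rewrite hn opprK => /(congr1 (fun t => t - 1)).
    by rewrite addrK subrr => ->; rewrite eqxx.
- move=> x k y [l [mu [z [Hz _ _ Hcx [Hcy _]]]]].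
  have [Hx _ _ _] := Hcx.
  have [v h0] := path_id0 Hx.
  rewrite /conv.
  rewrite -(@fsbig_widen _ _ _ _ [set (x, 0)]).
  * rewrite fsbig_set1 /= /Psi0 /prange h0 /= eqxx /= subr0 /Psi1 /phiL.
    case Hx1: (pfun x 0 1) => [e|]; last by rewrite mulr0.
    case: ifP => _; last by rewrite mulr0.
    by rewrite (path_rg Hx h0 Hx1) rg_idm.
  * by move=> _ -> /=; exact: inG_self Hx h0.
  * move=> [y' n] [/= HS Hni]; rewrite /preimage /= /Psi0.
    case: ifP => [/andP[/eqP Hn /eqP Hs]|_]; last by rewrite mul0r.
    by exfalso; apply: Hni; rewrite Hn Hs.
Qed.
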